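(* Let $a, b$ be positive integers with $b>1$ and let $i\ge 2$ be an integer with $\gcd(r_b(i),a)=1$. Then \[\sum_{\omega \in \operatorname{Ap}(S_a(b,i))} \omega = \sum_{j=2}^i \frac{b^i + b^{i-(j-1)}}{2}\, a^{(i)}_j.\]
   Context: For $\ell \ge 1$, $r_b(\ell) = \sum_{j=0}^{\ell-1} b^j$, and $r_b(0)=0$. For integers $m\ge 2$ and $j \ge 1$, $a^{(m)}_j := r_b(m) + a\, r_b(j-1)$, and $S_a(b,m)$ is the submonoid of $\mathbb{N}$ generated by $\{a^{(m)}_j : j\ge 1\}$ (a numerical semigroup with multiplicity $r_b(m)$ when $\gcd(r_b(m),a)=1$). $\operatorname{Ap}(S) = \{\omega\in S : \omega - \operatorname{m}(S) \notin S\}$ with $\operatorname{m}(S)$ the smallest nonzero element of $S$. *)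

(* Defs.v *)
From mathcomp Require Import all_boot.
Set Implicit Arguments. Unset Strict Implicit. Unset Printing Implicit Defensive.

Definition repunit (b l : nat) : nat := \sum_(0 <= j < l) b ^ j.

Definition agen (a b m j : nat) : nat := repunit b m + a * repunit b (j - 1).

Inductive inS (a b m : nat) : nat -> Prop :=
  | inS0 : inS a b m 0
  | inSadd (j x : nat) : 1 <= j -> inS a b m x -> inS a b m (agen a b m j + x).

Definition is_multiplicity (S : nat -> Prop) (mS : nat) : Prop :=
  [/\ S mS, 0 < mS & forall x, S x -> 0 < x -> mS <= x].

(* Apery set w.r.t. the multiplicity: w in S and w - m(S) not in S
   (w - m(S) is meant as an integer; it is in S only if m(S) <= w). *)
Definition Apery (S : nat -> Prop) (w : nat) : Prop :=
  exists mS, is_multiplicity S mS /\ S w /\ ~ (mS <= w /\ S (w - mS)).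

(* Main.v *)
Require Import Defs.
From mathcomp Require Import all_boot zify.
Set Implicit Arguments. Unset Strict Implicit. Unset Printing Implicit Defensive.

Lemma r0 b : repunit b 0 = 0. Proof. by rewrite /repunit big_geq. Qed.
Lemma rS b n : repunit b n.+1 = 1 + b * repunit b n.
Proof.
rewrite /repunit big_nat_recl // expn0; congr (_ + _).
rewrite big_distrr /=; apply: eq_bigr => j _; by rewrite expnS.
Qed.
Lemma rSr b n : repunit b n.+1 = repunit b n + b ^ n.
Proof. by rewrite /repunit big_nat_recr. Qed.
Lemma r1 b : repunit b 1 = 1. Proof. by rewrite rS r0 muln0. Qed.
Lemma rD b A B : repunit b (A + B) = repunit b A + b ^ A * repunit b B.
Proof.
elim: B => [|B IH]; first by rewrite addn0 r0 muln0 addn0.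
rewrite addnS !rSr IH expnD mulnDr addnA //.
Qed.
Lemma r_mono b A B : A <= B -> repunit b A <= repunit b B.
Proof. move=> h; rewrite -(subnKC h) rD; lia. Qed.
Lemma r_lt b L : 0 < b -> repunit b L < repunit b L.+1.
Proof. move=> hb; rewrite rSr; have := expn_gt0 b L; rewrite hb /=; lia. Qed.
Lemma r_gt0 b n : 0 < repunit b n.+1. Proof. rewrite rS; lia. Qed.

Fixpoint dig (b k j N : nat) : nat :=
  match k with
  | 0 => if j == 0 then N else 0
  | k'.+1 => if j == k'.+1 then N %/ repunit b k'.+2 else dig b k' j (N %% repunit b k'.+2)
  end.

Definition G b k N := \sum_(j < k.+1) dig b k j N.

Lemma G0 b N : G b 0 N = N. Proof. by rewrite /G big_ord1. Qed.
Lemma G_S b k N : G b k.+1 N = N %/ repunit b k.+2 + G b k (N %% repunit b k.+2).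
Proof.
rewrite /G big_ord_recr /= eqxx addnC; congr (_ + _).
apply: eq_bigr => j _ /=; by rewrite ltn_eqF.
Qed.

Lemma dig_val b k N : \sum_(j < k.+1) dig b k j N * repunit b j.+1 = N.
Proof.
elim: k N => [|k IH] N; first by rewrite big_ord1 /= r1 muln1.
rewrite big_ord_recr /= eqxx.
rewrite (eq_bigr (fun j : 'I_k.+1 => dig b k j (N %% repunit b k.+2) * repunit b j.+1)).
  by rewrite IH addnC -divn_eq.
move=> j _ /=; by rewrite ltn_eqF.
Qed.

Lemma dig0 b k j : dig b k j 0 = 0.
Proof. elim: k => [|k IH] /=; first by case: (j == 0).
by rewrite div0n mod0n IH; case: (j == k.+1). Qed.

Inductive rep (b L : nat) : nat -> nat -> Prop :=
| rep0 : rep b L 0 0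
| repS l C N : 0 < l <= L -> rep b L C N -> rep b L C.+1 (repunit b l + N).

Lemma rep_weak b L L' C N : L <= L' -> rep b L C N -> rep b L' C N.
Proof.
move=> hL; elim => [|l C0 N0 hl _ IH]; first exact: rep0.
apply: repS IH; lia.
Qed.

Lemma rep_copies b L l t C N : 0 < l <= L -> rep b L C N -> rep b L (t + C) (t * repunit b l + N).
Proof.
move=> hl H; elim: t => [|t IH] //=.
rewrite mulSn -addnA; exact: repS.
Qed.

Lemma rep_L0 b C N : rep b 0 C N -> C = 0 /\ N = 0.
Proof. case => // l C0 N0 hl; lia. Qed.

Lemma rep_1 b C N : rep b 1 C N -> N = C.
Proof.
elim => // l C0 N0 hl _ ->; have -> : l = 1 by lia. by rewrite r1.
Qed.

Lemma rep_split b L C N : rep b L.+1 C N ->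
  exists c C' Y, [/\ C = c + C', N = c * repunit b L.+1 + Y & rep b L C' Y].
Proof.
elim => [|l C0 N0 hl _ [c [C' [Y [e1 e2 HY]]]]].
  by exists 0, 0, 0; split => //; exact: rep0.
case: (ltnP l L.+1) => hlL.
  exists c, C'.+1, (repunit b l + Y); split; try lia.
  apply: repS HY; lia.
have -> : l = L.+1 by lia.
exists c.+1, C', Y; split => //; [lia | rewrite e2 mulSn; lia].
Qed.

Lemma minus1 b L C Z : rep b L C Z -> 0 < Z ->
  exists C3, C3 + 1 <= C + b /\ rep b L C3 (Z - 1).
Proof.
case => [//|l C0 N0 hl H _].
case: l hl => [|l] hl; first lia.
case: l hl => [|l] hl.
  exists C0; split; first lia. by rewrite r1 add1n subn1.
exists (b + C0); split; first lia.
have -> : repunit b l.+2 + N0 - 1 = b * repunit b l.+1 + N0 by rewrite rS; lia.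
apply: rep_copies H; lia.
Qed.

Lemma iterR b L :
  (forall C X, rep b L C X -> repunit b L.+1 <= X ->
     exists C', C'.+1 <= C /\ rep b L C' (X - repunit b L.+1)) ->
  forall t C X, rep b L C X -> t * repunit b L.+1 <= X ->
     exists C', C' + t <= C /\ rep b L C' (X - t * repunit b L.+1).
Proof.
move=> RL; elim => [|t IH] C X H hX.
  by exists C; rewrite addn0 mul0n subn0.
have [C1 [h1 H1]] := RL C X H ltac:(rewrite mulSn in hX; lia).
have [C2 [h2 H2]] := IH C1 _ H1 ltac:(rewrite mulSn in hX; lia).
exists C2; split; first lia.
by rewrite mulSn subnDA.
Qed.

Lemma R_lemma b L : forall C X, rep b L C X -> repunit b L.+1 <= X ->
     exists C', C'.+1 <= C /\ rep b L C' (X - repunit b L.+1).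
Proof.
elim: L => [|L IHL] C X H hX.
  have [_ e] := rep_L0 H; move: hX; rewrite e r1 //.
have [c [C' [Y [eC eX HY]]]] := rep_split H.
have e2 : repunit b L.+2 = 1 + b * repunit b L.+1 by rewrite rS.
have e1 : repunit b L.+1 = 1 + b * repunit b L by rewrite rS.
case: (leqP b.+1 c) => hc.
  have [C2 [hC2 H2]] : exists C2, C2 <= b + C' /\ rep b L.+1 C2 (b * repunit b L + Y).
    case: L {IHL H hX eX HY e2 e1} (HY) => [|L] HY'.
      exists C'; rewrite r0 muln0 add0n; split; [lia | exact: rep_weak HY'].
    exists (b + C'); split => //; apply: rep_copies; [lia | exact: rep_weak HY'].
  set t := c - b.+1.
  exists (t + C2); split; first lia.
  have -> : X - repunit b L.+2 = t * repunit b L.+1 + (b * repunit b L + Y).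
    have ec : c = t + b.+1 by rewrite /t; lia.
    rewrite eX ec e2 mulnDl mulSn; lia.
  apply: rep_copies H2; lia.
have eb : b * repunit b L.+1 = c * repunit b L.+1 + (b - c) * repunit b L.+1.
  by rewrite -mulnDl subnKC // ltnW.
have [C'' [h'' H'']] := @iterR b L IHL (b - c) C' Y HY ltac:(lia).
have [C3 [h3 H3]] := minus1 H'' ltac:(lia).
exists C3; split; first lia.
have -> : X - repunit b L.+2 = Y - (b - c) * repunit b L.+1 - 1 by lia.
exact: rep_weak H3.
Qed.

Lemma greedy_opt b k C N : rep b k.+1 C N -> G b k N <= C.
Proof.
elim: k C N => [|k IH] C N H.
  by rewrite G0 (rep_1 H).
rewrite G_S.
have [c [C' [Y [eC eN HY]]]] := rep_split H.
set R := repunit b k.+2.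
have R0 : 0 < R by exact: r_gt0.
set q := N %/ R. set rho := N %% R.
have eNq : N = q * R + rho by exact: divn_eq.
have hcq : c <= q by rewrite /q leq_divRL //; lia.
have eq : q * R = c * R + (q - c) * R by rewrite -mulnDl subnKC.
have [C'' [h'' H'']] := @iterR b k.+1 (@R_lemma b k.+1) (q - c) C' Y HY ltac:(rewrite /R in eq eNq; lia).
rewrite (_ : Y - (q - c) * repunit b k.+2 = rho) in H''; last first.
  rewrite -/R; lia.
have := IH _ _ H''; lia.
Qed.

Lemma inS_add a b m x y : inS a b m x -> inS a b m y -> inS a b m (x + y).
Proof.
move=> Hx Hy; elim: Hx => [|j x0 hj _ IH]; first by rewrite add0n.
rewrite -addnA; exact: inSadd.
Qed.

Lemma inS_mul a b m j c : 1 <= j -> inS a b m (c * agen a b m j).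
Proof.
move=> hj; elim: c => [|c IH]; first exact: inS0.
rewrite mulSn; exact: inSadd.
Qed.

Lemma agen1 a b m : agen a b m 1 = repunit b m.
Proof. by rewrite /agen subnn r0 muln0 addn0. Qed.

Lemma inS_m a b m t : inS a b m (t * repunit b m).
Proof. rewrite -(agen1 a); exact: inS_mul. Qed.

Lemma inS_ge a b m x : inS a b m x -> 0 < x -> repunit b m <= x.
Proof.
case => [//|j x0 hj _ _]; rewrite /agen; lia.
Qed.

Lemma modred b L l : exists l' t, l' <= L /\ repunit b l = repunit b l' + repunit b L.+1 * t.
Proof.
elim/ltn_ind: l => l IH.
case: (leqP l L) => hlL; first by exists l, 0; split; lia.
have el : l = (l - L.+1) + L.+1 by lia.
have [l' [t [h1 h2]]] := IH (l - L.+1) ltac:(lia).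
exists l', (t + b ^ (l - L.+1)); split => //.
rewrite {1}el rD h2; lia.
Qed.

Lemma S_struct a b L x : 0 < b -> inS a b L.+1 x ->
  exists N C q, [/\ N < repunit b L.+1, rep b L C N & x = a * N + repunit b L.+1 * (C + q)].
Proof.
move=> hb; elim => [|j x0 hj _ [N [C [q [hN HN ex]]]]].
  exists 0, 0, 0; split => //; [exact: r_gt0 | exact: rep0 | lia].
have [l' [t [hl' el]]] := modred b L (j - 1).
set m := repunit b L.+1 in hN ex el *.
rewrite /agen el ex -/m.
case: l' hl' el => [|l'] hl' el.
  exists N, C, (q + 1 + a * t); split => //; rewrite r0; lia.
have HM : rep b L C.+1 (repunit b l'.+1 + N) by apply: repS HN; lia.
have hlm : repunit b l'.+1 < m.
  apply: (leq_ltn_trans (r_mono b hl')); exact: r_lt.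
case: (ltnP (repunit b l'.+1 + N) m) => hM.
  exists (repunit b l'.+1 + N), C.+1, (q + a * t); split => //; lia.
have [C' [hC' HC']] := R_lemma HM hM.
exists (repunit b l'.+1 + N - m), C', (C.+1 - C' + q + a * t + a); split => //; first lia.
have e : a * (repunit b l'.+1 + N - m) + a * m = a * (repunit b l'.+1 + N).
  by rewrite -mulnDr subnK.
lia.
Qed.

Lemma tri n : 2 * \sum_(0 <= e < n) e = n * (n - 1).
Proof.
elim: n => [|n IH]; first by rewrite big_geq.
rewrite big_nat_recr //= mulnDr IH; case: n {IH} => [|n] //; rewrite !subSS !subn0; nia.
Qed.

Lemma sum_shift (F : nat -> nat) c R :
  \sum_(c <= N < c + R) F N = \sum_(0 <= t < R) F (c + t).
Proof.
have := @big_addn nat 0 addn 0 (c + R) c xpredT F.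
rewrite add0n addKn => ->; apply: eq_bigr => t _; by rewrite addnC.
Qed.

Lemma sum_split (F : nat -> nat) d R :
  \sum_(0 <= N < d * R) F N = \sum_(0 <= e < d) \sum_(0 <= t < R) F (e * R + t).
Proof.
elim: d => [|d IH]; first by rewrite mul0n !big_geq.
rewrite big_nat_recr //= mulSn addnC (@big_cat_nat _ _ _ (d * R)) //=; last lia.
by rewrite IH sum_shift.
Qed.

Lemma digsum b k j : 0 < b -> j <= k ->
  2 * \sum_(0 <= N < repunit b k.+2) dig b k j N = b ^ k.+2 + b ^ (k.+1 - j).
Proof.
move=> hb; elim: k j => [|k IH] j hj.
  have -> : j = 0 by lia.
  rewrite (eq_bigr (fun N => N)); last by [].
  rewrite tri rS r1 subn1 /= subn0 expn1; nia.
set R := repunit b k.+2.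
have R0 : 0 < R by exact: r_gt0.
rewrite (rS b k.+2) -/R (addnC 1) addn1 big_nat_recr //= sum_split.
rewrite (eq_bigr (fun e => \sum_(0 <= t < R) (if j == k.+1 then e else dig b k j t))); last first.
  move=> e _; apply: eq_big_nat => t /andP [_ ht].
  by rewrite divnMDl // modnMDl (divn_small ht) (modn_small ht) addn0.
have eR : 1 + b * R = R + b ^ k.+2 by rewrite -rS rSr.
case: eqP => [ej|nej].
  rewrite ej subSn // subnn expn1 (eq_bigr (fun e => e * R)); last first.
    by move=> e _; rewrite sum_nat_const_nat subn0 mulnC.
  rewrite -big_distrl /= mulnDr mulnA tri mulnK //.
  rewrite expnS.
  clearbody R; clear IH; case: b hb eR => [//|b'] _ eR.
  rewrite subn1 /=; nia.
rewrite (eq_bigr (fun e => \sum_(0 <= t < R) dig b k j t)) //.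
rewrite sum_nat_const_nat subn0 -/R modnMl.
rewrite dig0 addn0 mulnCA IH; last lia.
rewrite (_ : k.+2 - j = (k.+1 - j).+1); last lia.
by rewrite mulnDr -!expnS.
Qed.

Definition W a b n N := \sum_(j < n.+1) dig b n j N * agen a b n.+2 j.+2.

Lemma W_eq a b n N : W a b n N = a * N + repunit b n.+2 * G b n N.
Proof.
rewrite /W /agen.
rewrite (eq_bigr (fun j : 'I_n.+1 => dig b n j N * repunit b n.+2 + a * (dig b n j N * repunit b j.+1))); last first.
  by move=> j _; rewrite subSS subn0 mulnDr mulnCA.
rewrite big_split /= -big_distrl -big_distrr /= dig_val /G addnC; congr (_ + _); exact: mulnC.
Qed.

Lemma inS_W a b n N : inS a b n.+2 (W a b n N).
Proof.
rewrite /W; apply: (big_ind (inS a b n.+2)); [exact: inS0 | exact: inS_add | ].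
move=> j _; exact: inS_mul.
Qed.

Lemma inj_mod a m N N' X Y : coprime m a -> N < m -> N' < m ->
  a * N + m * X = a * N' + m * Y -> N = N'.
Proof.
move=> hc hN hN' e.
wlog le : N N' X Y hN hN' e / N <= N'.
  move=> H; case: (leqP N N') => h; first exact: (H _ _ X Y).
  symmetry; exact: (H N' N Y X hN' hN (esym e) (ltnW h)).
have d : m %| a * (N' - N).
  have -> : a * (N' - N) = m * (X - Y) by rewrite mulnBr mulnBr; lia.
  exact: dvdn_mulr.
rewrite Gauss_dvdr // in d.
case: (posnP (N' - N)) => h; first lia.
have := dvdn_leq h d; lia.
Qed.

Theorem corollary25 (a b i : nat) :
  0 < a -> 1 < b -> 2 <= i -> coprime (repunit b i) a ->
  exists s : seq nat,
    [/\ uniq s,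
        (forall w, w \in s <-> Apery (inS a b i) w) &
        \sum_(w <- s) w =
          \sum_(2 <= j < i.+1) ((b ^ i + b ^ (i - (j - 1))) %/ 2) * agen a b i j].
Proof.
move=> ha hb hi.
case: i hi => [|[|n]] // _ hc.
have hb0 : 0 < b by lia.
have m0 : 0 < repunit b n.+2 by exact: r_gt0.
set m := repunit b n.+2 in hc m0 *.
have Sx : forall x, inS a b n.+2 x ->
    exists N k, N < m /\ x = W a b n N + m * k.
  move=> x hx; have [N [C [q [hN HN ex]]]] := S_struct hb0 hx.
  have hG := greedy_opt HN.
  exists N, (C - G b n N + q); split => //.
  rewrite W_eq ex -/m -addnA -mulnDr; congr (_ + _ * _); lia.
have Winj : forall N N' k, N < m -> N' < m -> W a b n N = W a b n N' + m * k ->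
    N = N' /\ k = 0.
  move=> N N' k hN hN' e.
  have e' : a * N + m * G b n N = a * N' + m * (G b n N' + k).
    by move: e; rewrite !W_eq -/m mulnDr addnA.
  have eN := inj_mod hc hN hN' e'.
  split => //; subst N'.
  move: e'; rewrite mulnDr addnA => /eqP; rewrite -{1}[_ + m * G b n N]addn0 eqn_add2l.
  rewrite eq_sym muln_eq0 => /orP [/eqP|/eqP //]; lia.
have mS : inS a b n.+2 m by rewrite -[m]mul1n; exact: inS_m.
exists [seq W a b n N | N <- index_iota 0 m]; split.
- rewrite map_inj_in_uniq ?iota_uniq //.
  move=> N N'; rewrite !mem_index_iota => /andP [_ hN] /andP [_ hN'] e.
  have [] := Winj N N' 0 hN hN'; by rewrite ?muln0 ?addn0.
- move=> w; split.
  + move=> /mapP [N]; rewrite mem_index_iota => /andP [_ hN] ->.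
    exists m; split; first split => //.
      by move=> x hx hx0; exact: inS_ge hx hx0.
    split; first exact: inS_W.
    move=> [hmW hS].
    have [N' [k [hN' ek]]] := Sx _ hS.
    have e2 : W a b n N = W a b n N' + m * k.+1 by rewrite mulnS; lia.
    by have [_] := Winj N N' k.+1 hN hN' e2.
  + move=> [mS' [[hmS hmS0 hmin] [hw hnot]]].
    have emS : mS' = m.
      apply/eqP; rewrite eqn_leq hmin //=; exact: inS_ge hmS hmS0.
    subst mS'.
    have [N [k [hN ek]]] := Sx _ hw.
    case: k ek => [|k] ek.
      apply/mapP; exists N; first by rewrite mem_index_iota.
      by rewrite ek muln0 addn0.
    exfalso; apply: hnot; split; first by rewrite ek mulnS; lia.
    have -> : w - m = W a b n N + m * k by rewrite ek mulnS; lia.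
    apply: inS_add; first exact: inS_W.
    rewrite mulnC; exact: inS_m.
- rewrite big_map /W exchange_big /=.
  have -> : \sum_(2 <= j < n.+3) ((b ^ n.+2 + b ^ (n.+2 - (j - 1))) %/ 2) * agen a b n.+2 j
      = \sum_(j < n.+1) ((b ^ n.+2 + b ^ (n.+1 - j)) %/ 2) * agen a b n.+2 j.+2.
    rewrite -{1}[2]add0n big_addn big_mkord.
    apply: eq_bigr => j _; rewrite addn2 subSS subn0 subSS //.
  apply: eq_bigr => j _.
  rewrite -big_distrl /=.
  have e := @digsum b n j hb0 (ltn_ord j : j <= n).
  by rewrite -e mulKn.
Qed.
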